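(* For the information exchange $\mathcal{E}$, failure model $SO_t$ and decision protocol $P'$ described in the context, $P'$ is an SBA protocol with respect to $\mathcal{E}$ and $SO_t$, i.e., in every run $r$ of $\mathcal{I}_{P',\mathcal{E},SO_t}$: (Unique-Decision) each agent performs an action $\mathtt{decide}_i(v)$ at most once; (Simultaneous-Agreement) if a nonfaulty agent $i$ performs $\mathtt{decide}_i(v)$ at time $m$ then every nonfaulty agent $j$ performs $\mathtt{decide}_j(v)$ at time $m$; (Validity) if a nonfaulty agent performs $\mathtt{decide}_i(v)$ then some agent has initial value $v$ in $r$.
   Context: Agents $\mathrm{Agt}=\{1,\dots,n\}$, a bound $t\le n$, decision values $V=\{0,1\}$, actions $A_i=\{\mathtt{noop},\mathtt{decide}_i(0),\mathtt{decide}_i(1)\}$. Information exchange $\mathcal{E}$: agent $i$'s local states are tuples $\langle\mathit{init}_i,\mathit{known}_i,\mathit{new}_i,\mathit{kfaulty}_i,\mathit{done}_i,\mathit{time}_i\rangle$ with $\mathit{init}_i\in\{0,1\}$, $\mathit{known}_i,\mathit{new}_i\subseteq\{0,1\}$, $\mathit{kfaulty}_i\subseteq\mathrm{Agt}$, $\mathit{done}_i\in\{0,1\}$, $\mathit{time}_i\in\mathbb{N}$; initial states have $\mathit{known}_i=\mathit{new}_i=\{\mathit{init}_i\}$, $\mathit{kfaulty}_i=\emptyset$, $\mathit{done}_i=\mathit{time}_i=0$. Messages are $\bot$ or pairs $\langle N,F\rangle$ with $N\subseteq\{0,1\}$, $F\subseteq\mathrm{Agt}$. In each round agent $i$ sends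 the same message to every agent $j\in\mathrm{Agt}$ (including itself): $\langle\emptyset,\emptyset\rangle$ if $\mathit{done}_i=1$ or its action is a $\mathtt{decide}$ action, and $\langle\mathit{new}_i,\mathit{kfaulty}_i\rangle$ otherwise. Update after action $a$ and receiving messages, where $J$ is the set of agents from which a (non-$\bot$) message $\langle N_j,F_j\rangle$ is received: $\mathit{init}$ unchanged; $\mathit{known}'_i=\mathit{known}_i\cup\bigcup_{j\in J}N_j$; $\mathit{new}'_i=\mathit{known}'_i\setminus\mathit{known}_i$; $\mathit{kfaulty}'_i=\mathit{kfaulty}_i\cup(\mathrm{Agt}\setminus J)\cup\bigcup_{j\in J}F_j$; $\mathit{done}'_i=1$ if $a$ is a $\mathtt{decide}$ action, else $\mathit{done}_i$; $\mathit{time}'_i=\mathit{time}_i+1$. Decision protocol $P'$: $P'_i(s)=\mathtt{decide}_i(v)$ if $\mathit{done}_i=0$, $v$ is the least element of $\mathit{known}_i$, and either $\mathit{time}_i=t+1$ or $\mathit{kfaulty}_i=\mathrm{Agt}\setminus\{i\}$; otherwise $P'_i(s)=\mathtt{noop}$. Failure model $SO_t$ (sending omissions): in each run there is a set of at most $t$ agents, and the only failures are that in any round, some messages sent by these agents (to any recipients, possibly themselves) may be lost (received as $\bot$); all other messages are delivered and local states evolve without perturbation. Runs of $\mathcal{I}_{P',\mathcal{E},SO_t}$ start from any combination of initial states and any such failure pattern; at each time $k$ each agent $i$ performs $P'_i$ of its current state, sends its messages, and updates its state from the messages it receives in round $k+1$. An agent is nonfaulty in a run if none of its messages is ever lost.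 *)

(* Defs.v *)
From mathcomp Require Import all_boot.
Set Implicit Arguments. Unset Strict Implicit. Unset Printing Implicit Defensive.

(* Decision values V = {0,1} are encoded as bool: 0 = false, 1 = true. *)
Definition V := bool.

Definition leastV (K : {set V}) : V := if false \in K then false else true.

Section Model.
Variable n : nat.
Notation Agt := 'I_n.

Record lstate := LState {
  init_ : V;
  known_ : {set V};
  new_ : {set V};
  kfaulty_ : {set Agt};
  done_ : bool;
  time_ : nat }.

(* actions noop / decide_i(v) (agent index implicit: the agent acting) *)
Inductive action := Noop | Decide of V.

(* messages: None = bot (lost), Some (N, F) = <N, F> *)
Definition msg := option ({set V} * {set Agt}).

Definition init_state (v : V) : lstate :=
  LState v [set v] [set v] set0 false 0.

Definition Pprime (t : nat) (i : Agt) (s : lstate) : action :=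
  if ~~ done_ s && ((time_ s == t.+1) || (kfaulty_ s == [set j | j != i]))
  then Decide (leastV (known_ s)) else Noop.

Definition send (s : lstate) (a : action) : {set V} * {set Agt} :=
  if done_ s then (set0, set0)
  else if a is Decide _ then (set0, set0) else (new_ s, kfaulty_ s).

Definition msgN (m : msg) : {set V} := if m is Some p then p.1 else set0.
Definition msgF (m : msg) : {set Agt} := if m is Some p then p.2 else set0.

Definition update (s : lstate) (a : action) (rcv : Agt -> msg) : lstate :=
  let known' := known_ s :|: \bigcup_(j : Agt) msgN (rcv j) in
  LState (init_ s)
         known'
         (known' :\: known_ s)
         (kfaulty_ s :|: [set j | rcv j == None] :|: \bigcup_(j : Agt) msgF (rcv j))
         (if a is Decide _ then true else done_ s)
         (time_ s).+1.

(* A run is determined by the initial values and the failure pattern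
   lost k j i = "the message sent by j to i in round k+1 is lost". *)
Variables (t : nat) (init : Agt -> V) (lost : nat -> Agt -> Agt -> bool).

Fixpoint state (k : nat) : Agt -> lstate :=
  match k with
  | 0 => fun i => init_state (init i)
  | k'.+1 => fun i =>
      let st := state k' in
      update (st i) (Pprime t i (st i))
        (fun j => if lost k' j i then None
                  else Some (send (st j) (Pprime t j (st j))))
  end.

Definition act (k : nat) (i : Agt) : action := Pprime t i (state k i).

Definition nonfaulty (i : Agt) : Prop := forall k j, lost k i j = false.

Definition unique_decision : Prop :=
  forall i m1 m2 v1 v2, act m1 i = Decide v1 -> act m2 i = Decide v2 -> m1 = m2.

Definition simultaneous_agreement : Prop :=
  forall i j m v, nonfaulty i -> nonfaulty j ->
    act m i = Decide v -> act m j = Decide v.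

Definition validity : Prop :=
  forall i m v, nonfaulty i -> act m i = Decide v -> exists j, init j = v.

End Model.

Definition SO_pattern (n t : nat) (lost : nat -> 'I_n -> 'I_n -> bool) : Prop :=
  exists Fa : {set 'I_n}, #|Fa| <= t /\ (forall k i j, lost k i j -> i \in Fa).

(* Main.v *)
Require Import Defs.
From mathcomp Require Import all_boot.
Set Implicit Arguments. Unset Strict Implicit. Unset Printing Implicit Defensive.

Section S.
Variables (n t : nat) (init : 'I_n -> V) (lost : nat -> 'I_n -> 'I_n -> bool).
Notation st k i := (state t init lost k i).
Notation ac k i := (act t init lost k i).

Definition rcv k i := (fun j => if lost k j i then None
                  else Some (send (st k j) (Pprime t j (st k j)))).

Lemma stS k i : st k.+1 i = update (st k i) (Pprime t i (st k i)) (rcv k i).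
Proof. by []. Qed.

Lemma time_st k i : time_ (st k i) = k.
Proof. by elim: k i => [|k IH] i //=; rewrite IH. Qed.

Lemma new_sub k i : new_ (st k i) \subset known_ (st k i).
Proof. case: k => [|k] //=; exact: subsetDl. Qed.

Lemma known_step k i : known_ (st k i) \subset known_ (st k.+1 i).
Proof. rewrite stS /=; exact: subsetUl. Qed.

Lemma known_mono k k' i : k <= k' -> known_ (st k i) \subset known_ (st k' i).
Proof.
elim: k' => [|k' IH]; first by rewrite leqn0 => /eqP ->.
rewrite leq_eqVlt => /orP [/eqP -> //| H].
exact: subset_trans (IH H) (known_step k' i).
Qed.

Lemma known_split k i v : v \in known_ (st k.+1 i) ->
  v \in known_ (st k i) \/ v \in new_ (st k.+1 i).
Proof.
move=> H; case E: (v \in known_ (st k i)); first by left.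
by right; rewrite stS /= inE E /=; rewrite stS in H.
Qed.

Lemma recv k i v : v \in new_ (st k.+1 i) ->
  exists g, lost k g i = false /\ v \in new_ (st k g).
Proof.
rewrite stS /= inE => /andP [Hn /setUP [H|]]; first by rewrite H in Hn.
move=> /bigcupP [g _]; rewrite /rcv; case E: (lost k g i); first by rewrite /= inE.
move=> H; exists g; split => //; move: H; rewrite /= /send.
case: (done_ (st k g)); first by rewrite inE.
by case: (Pprime t g (st k g)) => //= ?; rewrite inE.
Qed.

Lemma deliver k g i v : lost k g i = false -> done_ (st k g) = false ->
  ac k g = Noop -> v \in new_ (st k g) -> v \in known_ (st k.+1 i).
Proof.
move=> Hl Hd Ha Hv; rewrite stS /=; apply/setUP; right.
apply/bigcupP; exists g => //; rewrite /rcv Hl /= /send Hd.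
by rewrite /act in Ha; rewrite Ha.
Qed.

Lemma kf_faulty k i a : a \in kfaulty_ (st k i) -> exists k' b, lost k' a b.
Proof.
elim: k i => [|k IH] i; first by rewrite /= inE.
rewrite stS /= => /setUP [/setUP [/IH //|]|].
  by rewrite inE /rcv; case E: (lost k a i) => // _; exists k, i.
move=> /bigcupP [g _]; rewrite /rcv; case: (lost k g i) => //=.
  by rewrite inE.
rewrite /send; case: (done_ (st k g)); first by rewrite inE.
case: (Pprime t g (st k g)) => [|?] /=; [exact: IH | by rewrite inE].
Qed.

Lemma known_valid k i v : v \in known_ (st k i) -> exists j, init j = v.
Proof.
elim: k i v => [|k IH] i v.
  by rewrite /= inE => /eqP ->; exists i.
move=> /known_split [/IH //|/recv [g [_ Hg]]].
by apply: (IH g); apply: (subsetP (new_sub k g)).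
Qed.

Lemma act_dec k i v : ac k i = Decide v ->
  [/\ done_ (st k i) = false, v = leastV (known_ (st k i)) &
     (k == t.+1) || (kfaulty_ (st k i) == [set j | j != i])].
Proof.
rewrite /act /Pprime time_st.
case: (done_ (st k i)) => //=; case: ifP => // H [<-]; by [].
Qed.

Lemma done_S k i : done_ (st k.+1 i) = (if ac k i is Decide _ then true else done_ (st k i)).
Proof. by rewrite stS. Qed.

Lemma unique_ok : unique_decision t init lost.
Proof.
have mono : forall k k' i, k <= k' -> done_ (st k i) -> done_ (st k' i).
  move=> k k' i; elim: k' => [|k' IH]; first by rewrite leqn0 => /eqP ->.
  rewrite leq_eqVlt => /orP [/eqP -> //| H] Hd.
  by rewrite done_S; case: (ac k' i) => //; apply: IH.
have key : forall i m1 m2 v1 v2, m1 < m2 -> ac m1 i = Decide v1 -> ac m2 i = Decide v2 -> False.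
  move=> i m1 m2 v1 v2 Hlt H1 /act_dec [H2 _ _].
  have : done_ (st m1.+1 i) by rewrite done_S H1.
  by move/(mono _ _ _ Hlt); rewrite H2.
move=> i m1 m2 v1 v2 H1 H2; case: (ltngtP m1 m2) => // H.
  by case: (key _ _ _ _ _ H H1 H2).
by case: (key _ _ _ _ _ H H2 H1).
Qed.

Lemma validity_ok : validity t init lost.
Proof.
move=> i m v _ /act_dec [_ -> _].
have Hi : init i \in known_ (st 0 i) by rewrite /= inE.
have := subsetP (known_mono i (leq0n m)) _ Hi.
rewrite /leastV; case: ifP => H; first by move=> _; apply: known_valid H.
case: (init i) => //= H'; [exact: known_valid H' | by rewrite H' in H].
Qed.


Lemma kf_nonfaulty k i a : nonfaulty lost a -> a \notin kfaulty_ (st k i).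
Proof.
move=> Ha; apply/negP => /kf_faulty [k' [b Hb]].
by rewrite Ha in Hb.
Qed.

Lemma quiet g g' : nonfaulty lost g -> nonfaulty lost g' -> g != g' ->
  forall k, k <= t -> done_ (st k g) = false /\ ac k g = Noop.
Proof.
move=> Hg Hg' Hne; elim=> [|k IH] Hk.
  split => //; rewrite /act /Pprime time_st /=.
  case: ifP => // /eqP E.
  have : g' \in (set0 : {set 'I_n}) by rewrite E inE eq_sym Hne.
  by rewrite inE.
have [Hd Ha] := IH (ltnW Hk).
have Hd' : done_ (st k.+1 g) = false by rewrite done_S Ha.
split => //; rewrite /act /Pprime time_st Hd' /=.
case: ifP => // /orP [/eqP E|/eqP E].
  by move: Hk; rewrite E ltnn.
have H := kf_nonfaulty k.+1 g Hg'; simpl in H; rewrite E inE eq_sym Hne in H; by [].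
Qed.

Lemma firstnew k g v : v \in known_ (st k g) -> exists l, l <= k /\ v \in new_ (st l g).
Proof.
elim: k => [|k IH]; first by move=> H; exists 0.
move/known_split => [/IH [l [Hl Hv]]|H]; first by exists l; split => //; apply: leqW.
by exists k.+1.
Qed.

Lemma memK v l g : (g \in [set g | v \in known_ (st l g)]) = (v \in known_ (st l g)).
Proof. by rewrite in_set. Qed.

Lemma Qlem v j : forall l h, v \in new_ (st l h) -> v \notin known_ (st l j) ->
  l.+1 <= #|[set g | v \in known_ (st l g)]|.
Proof.
elim=> [|l IH] h Hh Hj.
  apply/card_gt0P; exists h; rewrite inE; exact: (subsetP (new_sub 0 h)).
have [g [_ Hg]] := recv Hh.
have Hj' : v \notin known_ (st l j).
  by apply/negP => H; move/negP: Hj; apply; apply: (subsetP (known_step l j)).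
apply: leq_ltn_trans (IH g Hg Hj') _.
apply: proper_card; apply/properP; split.
  by apply/subsetP => x; rewrite !memK => H; apply: (subsetP (known_step l x)).
exists h; rewrite memK; first exact: (subsetP (new_sub _ h)).
by move: Hh; rewrite stS /= inE => /andP [].
Qed.

Lemma prop_known i j x (Fa : {set 'I_n}) : #|Fa| <= t ->
  (forall k a b, lost k a b -> a \in Fa) ->
  nonfaulty lost i -> nonfaulty lost j -> i != j ->
  x \in known_ (st t.+1 i) -> x \in known_ (st t.+1 j).
Proof.
move=> hF hL Hi Hj Hne Hx; case Hxj: (x \in known_ (st t.+1 j)) => //.
set K := [set g | x \in known_ (st t g)].
have c1 : forall g, g \in K -> ~ nonfaulty lost g.
  move=> g; rewrite inE => Hg Hng.
  have [l [Hl Hl']] := firstnew Hg.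
  case E: (g == j).
    move/eqP: E => E; subst g.
    by move: (subsetP (known_step t j) _ Hg); rewrite Hxj.
  have [Hd Ha] := quiet Hng Hj (negbT E) Hl.
  have := deliver (i:=j) (Hng l j) Hd Ha Hl'.
  move=> H; have := subsetP (known_mono j (Hl : l.+1 <= t.+1)) _ H; by rewrite Hxj.
have c2 : K \subset Fa.
  apply/subsetP => g Hg; case E: (g \in Fa) => //; exfalso; apply: (c1 g Hg).
  by move=> k b; case E': (lost k g b) => //; rewrite (hL _ _ _ E') in E.
move/known_split: Hx => [H|H].
  by exfalso; apply: (c1 i) => //; rewrite inE.
have [g [_ Hg]] := recv H.
have Hj' : x \notin known_ (st t j).
  by apply/negP => H'; move: (subsetP (known_step t j) _ H'); rewrite Hxj.
have := Qlem Hg Hj'; rewrite -/K => HK.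
have := leq_trans HK (leq_trans (subset_leq_card c2) hF).
by rewrite ltnn.
Qed.

End S.

Theorem proposition17 (n t : nat) (ht : t <= n)
    (init : 'I_n -> V) (lost : nat -> 'I_n -> 'I_n -> bool)
    (hSO : SO_pattern t lost) :
  unique_decision t init lost /\
  simultaneous_agreement t init lost /\
  validity t init lost.
Proof.
split; first exact: unique_ok.
split; last exact: validity_ok.
have [Fa [hF hL]] := hSO.
move=> i j m v Hi Hj Hd.
case E: (i == j); first by move/eqP: E => <-.
have Hne : i != j by rewrite E.
have [Hdi Hv Hc] := act_dec Hd.
have Hm : m = t.+1.
  move/orP: Hc => [/eqP //|/eqP Hk].
  have H := kf_nonfaulty t init m i Hj; rewrite Hk inE eq_sym Hne in H; by [].
subst m.
have Hdj : done_ (state t init lost t.+1 j) = false.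
  have Hne' : j != i by rewrite eq_sym.
  have [Hd' Ha'] := quiet (t:=t) init Hj Hi Hne' (leqnn t).
  by rewrite done_S Ha'.
rewrite /act /Pprime time_st Hdj eqxx /= Hv.
congr Decide; rewrite /leastV.
have -> : (false \in known_ (state t init lost t.+1 j)) =
          (false \in known_ (state t init lost t.+1 i)) => //.
apply/idP/idP => H.
  by apply: (prop_known hF hL Hj Hi _ H); rewrite eq_sym.
exact: (prop_known hF hL Hi Hj Hne H).
Qed.
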